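(* Let $k$ be a field and for $n\ge1$ let $B_n=k[x,y]\big[(x-1)/(x^ny-1)\big]\subset k(x,y)$, where $k[x,y]$ is a polynomial ring in two variables. Then $B_n$ is degree-rigid for each $n\ge 1$, i.e. every non-negative degree function $\delta:B_n\to\mathbb{N}\cup\{-\infty\}$ satisfies $\delta(f)=0$ for all nonzero $f\in B_n$.
   Context: A degree function on an integral domain $R$ is a map $\deg:R\to\mathbb{Z}\cup\{-\infty\}$ such that $\deg r=-\infty$ iff $r=0$, $\deg(rs)=\deg r+\deg s$, and $\deg(r+s)\le\max\{\deg r,\deg s\}$; it is non-negative if its values lie in $\mathbb{N}\cup\{-\infty\}$. $R$ is degree-rigid if every non-negative degree function on $R$ is trivial (zero on all nonzero elements). *)

(* Defs.v *)
From HB Require Import structures.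
From mathcomp Require Import all_boot all_order all_algebra.
Set Implicit Arguments. Unset Strict Implicit. Unset Printing Implicit Defensive.
Import Order.TTheory GRing.Theory Num.Theory.
Local Open Scope ring_scope.

(* k[x,y] is modelled as {poly {poly k}}: x = 'X%:P (inner variable),
   y = 'X (outer variable).  k(x,y) is its fraction field. *)

Definition varx (k : fieldType) : {poly {poly k}} := ('X)%:P.
Definition vary (k : fieldType) : {poly {poly k}} := 'X.

Definition tgen (k : fieldType) (n : nat) : {fraction {poly {poly k}}} :=
  FracField.tofrac (varx k - 1) /
  FracField.tofrac (varx k ^+ n * vary k - 1).

Definition inBn (k : fieldType) (n : nat) (z : {fraction {poly {poly k}}}) : Prop :=
  exists P : {poly {poly {poly k}}},
    z = (map_poly (fun c : {poly {poly k}} => FracField.tofrac c) P).[tgen k n].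

(* N ∪ {-oo} encoded as option nat, None = -oo *)
Definition odeg_add (a b : option nat) : option nat :=
  match a, b with Some m, Some n => Some (m + n)%N | _, _ => None end.
Definition odeg_le (a b : option nat) : Prop :=
  match a, b with
  | None, _ => True
  | Some _, None => False
  | Some m, Some n => (m <= n)%N
  end.
Definition odeg_max (a b : option nat) : option nat :=
  match a, b with
  | None, _ => b
  | _, None => a
  | Some m, Some n => Some (maxn m n)
  end.

Definition nonneg_degree_fun (R : idomainType) (S : R -> Prop)
    (d : R -> option nat) : Prop :=
  [/\ forall r, S r -> (d r = None <-> r = 0),
      forall r s, S r -> S s -> d (r * s) = odeg_add (d r) (d s)
    & forall r s, S r -> S s -> odeg_le (d (r + s)) (odeg_max (d r) (d s))].

Definition degree_rigid (R : idomainType) (S : R -> Prop) : Prop :=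
  forall d : R -> option nat, nonneg_degree_fun S d ->
    forall r, S r -> r <> 0 -> d r = Some 0%N.

(* Main.v *)
Require Import Defs.
From HB Require Import structures.
From mathcomp Require Import all_boot all_order all_algebra.
From mathcomp Require Import ring zify.
Set Implicit Arguments. Unset Strict Implicit. Unset Printing Implicit Defensive.
Import Order.TTheory GRing.Theory Num.Theory.
Local Open Scope ring_scope.

Section S.
Variable k : fieldType.
Variable n : nat.
Local Notation R := {poly {poly k}}.
Local Notation F := {fraction R}.
Local Notation tf := (@FracField.tofrac R).
Local Notation S := (@inBn k n).

Lemma inS_tf c : S (tf c).
Proof. by exists c%:P; rewrite map_polyC hornerC. Qed.

Lemma inS_add a b : S a -> S b -> S (a + b).
Proof.
move=> [P ->] [Q ->]; exists (P + Q).
by rewrite (rmorphD (map_poly tf)) hornerD.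
Qed.

Lemma inS_mul a b : S a -> S b -> S (a * b).
Proof.
move=> [P ->] [Q ->]; exists (P * Q).
by rewrite (rmorphM (map_poly tf)) hornerM.
Qed.

Lemma inS_t : S (tgen k n).
Proof. by exists 'X; rewrite map_polyX hornerX. Qed.


Variable d : F -> option nat.
Hypothesis hd : nonneg_degree_fun S d.

Lemma dSome z : S z -> z != 0 -> exists m, d z = Some m.
Proof.
case: hd => H0 _ _ Sz nz; case E: (d z) => [m|]; first by exists m.
by move/eqP: nz; rewrite -(H0 _ Sz).
Qed.

Lemma dMul a b ma mb : S a -> S b -> d a = Some ma -> d b = Some mb ->
  d (a * b) = Some (ma + mb)%N.
Proof. by case: hd => _ HM _ Sa Sb Ea Eb; rewrite HM // Ea Eb. Qed.

Lemma d1 : d 1 = Some 0%N.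
Proof.
have S1 : S 1 by rewrite -tofrac1; apply: inS_tf.
have [m Em] := dSome S1 (oner_neq0 _).
have := dMul S1 S1 Em Em; rewrite mulr1 Em => -[] h; congr Some; lia.
Qed.

Lemma dunit a b : S a -> S b -> a * b = 1 -> d a = Some 0%N.
Proof.
move=> Sa Sb ab.
have an : a != 0 by apply/eqP => a0; move: ab; rewrite a0 mul0r => /eqP; rewrite eq_sym oner_eq0.
have bn : b != 0 by apply/eqP => b0; move: ab; rewrite b0 mulr0 => /eqP; rewrite eq_sym oner_eq0.
have [ma Ea] := dSome Sa an; have [mb Eb] := dSome Sb bn.
have := dMul Sa Sb Ea Eb; rewrite ab d1 Ea => -[]; case: ma {Ea} => //.
Qed.

Lemma dle_add a b ma mb : S a -> S b -> d a = Some ma -> d b = Some mb ->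
  odeg_le (d (a + b)) (Some (maxn ma mb)).
Proof. by case: hd => _ _ HA Sa Sb Ea Eb; have := HA _ _ Sa Sb; rewrite Ea Eb. Qed.

Lemma dle_sub1 a m : S a -> d a = Some m -> a - 1 != 0 ->
  exists m', d (a - 1) = Some m' /\ (m' <= m)%N.
Proof.
move=> Sa Ea nz.
have Sm1 : S (- 1) by rewrite -tofrac1 -tofracN; apply: inS_tf.
have Em1 : d (-1) = Some 0%N by apply: (dunit Sm1 Sm1); rewrite mulrNN mulr1.
have Sb : S (a - 1) by apply: inS_add.
have [m' Em'] := dSome Sb nz; exists m'; split => //.
by have := dle_add Sa Sm1 Ea Em1; rewrite Em' maxn0.
Qed.

Lemma dge_sub1 a m : S a -> a - 1 != 0 -> d a = Some m ->
  exists m', d (a - 1) = Some m' /\ (m <= m')%N.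
Proof.
move=> Sa nz Ea.
have Sm1 : S (- 1) by rewrite -tofrac1 -tofracN; apply: inS_tf.
have S1 : S 1 by rewrite -tofrac1; apply: inS_tf.
have Sb : S (a - 1) by apply: inS_add.
have [m' Em'] := dSome Sb nz; exists m'; split => //.
have := dle_add Sb S1 Em' d1; rewrite subrK Ea maxn0 //.
Qed.


Lemma dN1 : d (-1) = Some 0%N.
Proof.
have Sm1 : S (- 1) by rewrite -tofrac1 -tofracN; apply: inS_tf.
by apply: (dunit Sm1 Sm1); rewrite mulrNN mulr1.
Qed.

Definition Lp z := odeg_le (d z) (Some 0%N).

Lemma Lmul a b : S a -> S b -> Lp a -> Lp b -> Lp (a * b).
Proof.
case: hd => _ HM _ Sa Sb; rewrite /Lp HM //.
by case: (d a) => [x|] //; case: (d b) => [y|] //= /=; rewrite !leqn0 => /eqP-> /eqP->.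
Qed.

Lemma Ladd a b : S a -> S b -> Lp a -> Lp b -> Lp (a + b).
Proof.
case: hd => _ _ HA Sa Sb; have := HA _ _ Sa Sb; rewrite /Lp.
case: (d (a + b)) => [z|] //; case: (d a) => [x|] //; case: (d b) => [y|] //=.
all: move=> /=; lia.
Qed.

Lemma L0 : Lp 0.
Proof.
case: hd => H0 _ _; rewrite /Lp.
have -> : d 0 = None by apply/H0 => //; rewrite -tofrac0; apply: inS_tf.
done.
Qed.

Lemma Lconst (c : k) : Lp (tf (c%:P%:P)).
Proof.
have [->|cn] := eqVneq c 0; first by rewrite !polyC0 tofrac0; exact: L0.
have e0 : (c%:P%:P * (c^-1)%:P%:P : R) = 1 by rewrite -!polyCM mulfV.
have := congr1 tf e0; rewrite tofracM tofrac1 => e.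
by rewrite /Lp (@dunit (tf (c%:P%:P)) (tf (c^-1%:P%:P)) (inS_tf _) (inS_tf _) e).
Qed.

Hypothesis LX : Lp (tf (varx k)).
Hypothesis LY : Lp (tf (vary k)).
Hypothesis Lt : Lp (tgen k n).

Lemma Lall z : S z -> Lp z.
Proof.
have L2 : forall a : {poly k}, Lp (tf (a%:P)).
  elim/poly_ind => [|a c IH]; first by rewrite polyC0 tofrac0; exact: L0.
  rewrite polyCD polyCM tofracD tofracM.
  exact: (Ladd (inS_mul (inS_tf _) (inS_tf _)) (inS_tf _)
     (Lmul (inS_tf _) (inS_tf _) IH LX) (Lconst c)).
have L3 : forall c : R, Lp (tf c).
  elim/poly_ind => [|a c IH]; first by rewrite tofrac0; exact: L0.
  rewrite tofracD tofracM.
  exact: (Ladd (inS_mul (inS_tf _) (inS_tf _)) (inS_tf _)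
     (Lmul (inS_tf _) (inS_tf _) IH LY) (L2 c)).
case=> P ->; move: P; change (fun c : R => tf c) with tf.
have SP : forall P, S (map_poly tf P).[tgen k n] by move=> P; exists P.
elim/poly_ind => [|P c IH]; first by rewrite rmorph0 horner0; exact: L0.
rewrite (rmorphD (map_poly tf)) (rmorphM (map_poly tf)) /= map_polyX map_polyC hornerMXaddC.
exact: (Ladd (inS_mul (SP P) inS_t) (inS_tf _) (Lmul (SP P) inS_t IH Lt) (L3 c)).
Qed.

End S.

Lemma inS_opp (k : fieldType) n z : @inBn k n z -> @inBn k n (- z).
Proof.
move=> Sz; rewrite -mulN1r -tofrac1 -tofracN; apply: inS_mul => //; exact: inS_tf.
Qed.

Section Main.
Variable k : fieldType.
Variable m : nat.
Local Notation R := {poly {poly k}}.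
Local Notation F := {fraction R}.
Local Notation tf := (@FracField.tofrac R).
Local Notation S := (@inBn k m.+1).
Variable d : F -> option nat.
Hypothesis hd : nonneg_degree_fun S d.

Local Notation X := (tf (varx k)).
Local Notation Y := (tf (vary k)).
Local Notation t := (tgen k m.+1).

Lemma nzX : X != 0.
Proof. by rewrite tofrac_eq0 /varx polyC_eq0 polyX_eq0. Qed.
Lemma nzY : Y != 0.
Proof. by rewrite tofrac_eq0 /vary polyX_eq0. Qed.
Lemma nzA : (varx k - 1) != 0.
Proof.
have -> : varx k - 1 = ('X - 1%:P)%:P by rewrite /varx polyCB !polyC1.
by rewrite polyC_eq0 polyXsubC_eq0.
Qed.
Lemma nzB : (varx k ^+ m.+1 * vary k - 1) != 0.
Proof.
apply/eqP => h; have := congr1 (horner^~ 0) h; rewrite /varx /vary !hornerE.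
by move/eqP; rewrite oppr_eq0 oner_eq0.
Qed.

Lemma key : t * (X ^+ m.+1 * Y - 1) = X - 1.
Proof.
rewrite /tgen -tofracXn -tofracM -tofrac1 -!tofracB divfK // tofrac_eq0; exact: nzB.
Qed.

Lemma tn1 : 1 - t != 0.
Proof.
rewrite subr_eq0; apply/eqP => t1; have := key; rewrite -t1 mul1r => /eqP.
rewrite -tofracXn -tofracM -tofrac1 -!tofracB tofrac_eq subr_eq addrNK => /eqP h.
have := congr1 (horner^~ 0) h; rewrite /varx /vary !hornerE => /eqP; rewrite eq_sym.
by rewrite polyX_eq0.
Qed.


Lemma St : S t. Proof. exact: inS_t. Qed.
Lemma SX : S X. Proof. exact: inS_tf. Qed.
Lemma SY : S Y. Proof. exact: inS_tf. Qed.
Lemma SXn j : S (X ^+ j). Proof. rewrite -tofracXn; exact: inS_tf. Qed.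
Lemma S1 : S 1. Proof. rewrite -tofrac1; exact: inS_tf. Qed.

Lemma degs : [/\ d X = Some 0%N, d Y = Some 0%N & d t = Some 0%N].
Proof.
have [a Ea] := dSome hd SX nzX.
have [b Eb] := dSome hd SY nzY.
have nzt : t != 0.
  apply/eqP => t0; have := key; rewrite t0 mul0r => /eqP; rewrite eq_sym subr_eq0.
  rewrite -tofrac1 tofrac_eq => /eqP h; move: nzA; rewrite h subrr eqxx //.
have [c Ec] := dSome hd St nzt.
have EXn : forall j, d (X ^+ j) = Some (j * a)%N.
  elim=> [|j IH]; first by rewrite expr0 mul0n (d1 hd).
  by rewrite exprS (dMul hd SX (SXn j) Ea IH) mulSn.
have EXY := dMul hd (SXn m.+1) SY (EXn m.+1) Eb.
have SXY : S (X ^+ m.+1 * Y) by apply: inS_mul; [exact: SXn | exact: SY].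
have nzXY : X ^+ m.+1 * Y - 1 != 0.
  by rewrite -tofracXn -tofracM -tofrac1 -tofracB tofrac_eq0; exact: nzB.
have nzX1 : X - 1 != 0.
  by rewrite -tofrac1 -tofracB tofrac_eq0; exact: nzA.
have [q [Eq hq]] := dge_sub1 hd SXY nzXY EXY.
have [p [Ep hp]] := dle_sub1 hd SX Ea nzX1.
have SXY1 : S (X ^+ m.+1 * Y - 1) by apply: inS_add => //; apply: inS_opp; exact: S1.
have := dMul hd St SXY1 Ec Eq; rewrite key Ep => -[] hpq.
have c0 : c = 0%N by move: hp hq; rewrite hpq mulSn; lia.
have b0 : b = 0%N by move: hp hq; rewrite hpq mulSn; lia.
subst c b.
set u := 1 - t * X ^+ m * Y.
have Su : S u.
  apply: inS_add; first exact: S1.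
  apply: inS_opp; apply: inS_mul; last exact: SY.
  apply: inS_mul; [exact: St | exact: SXn].
have Xu : X * u = 1 - t.
  have k' := key; rewrite exprS in k'.
  rewrite /u; transitivity (X - (t * (X * X ^+ m * Y - 1) + t)); first by ring.
  by rewrite k'; ring.
have nzu : u != 0 by apply/eqP => u0; move: tn1; rewrite -Xu u0 mulr0 eqxx.
have [e Ee] := dSome hd Su nzu.
have Smt : S (- t) by apply: inS_opp; exact: St.
have Emt : d (- t) = Some 0%N.
  by rewrite -mulN1r (dMul hd _ St (dN1 hd) Ec) //; apply: inS_opp; exact: S1.
have := dle_add hd S1 Smt (d1 hd) Emt; rewrite -Xu (dMul hd SX Su Ea Ee) /=.
move=> h; have a0 : a = 0%N by lia.
by rewrite Ea a0 Eb Ec.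
Qed.

End Main.

Unset Implicit Arguments.
Theorem theorem4p2 (k : fieldType) (n : nat) (hn : (1 <= n)%N) :
  degree_rigid (@inBn k n).
Proof.
case: n hn => [//|m] _ d hd z Sz nz.
have [EX EY Et] := degs hd.
have L := Lall hd; rewrite /Lp EX EY Et in L.
have := L isT isT isT z Sz.
have [e Ee] := dSome hd Sz (introN eqP nz).
by rewrite /Lp Ee /= leqn0 => /eqP ->.
Qed.
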